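(* For every integer $T=3k+2$ with $k\ge 1$ and every $\sigma\in\mathfrak S_3$, the vector $\sigma c$ with $c=[2k+1,\,-k,\,-k,\,-k,\,2k+1,\,2k+1]$ defines a facet of $P^T$.
   Context: For an integer $T\ge 2$, let $\Omega_T$ be the set of words $w=s_1s_2\cdots s_T$ over $\{1,2,3\}$ with $s_l\neq s_{l+1}$ for $l=1,\dots,T-1$. For $w\in\Omega_T$ and an ordered pair $ij$, $i\neq j$, let $x_{ij}(w)$ be the number of indices $1\le l\le T-1$ with $s_ls_{l+1}=ij$. Vectors of $\mathbb R^6$ are indexed in the order $[x_{12},x_{13},x_{21},x_{23},x_{31},x_{32}]$. Let $a_w=[x_{12}(w),\dots,x_{32}(w)]$ and $P^T=\mathrm{conv}\{a_w:w\in\Omega_T\}$. $\mathfrak S_3$ acts on $\mathbb R^6$ by $(\sigma c)_{ij}=c_{\sigma(i)\sigma(j)}$. A vector $c$ defines a facet of $P^T$ if $c\cdot a_w\ge0$ for all $w\in\Omega_T$ and $\{x\in P^T: c\cdot x=0\}$ is a facet of $P^T$. *)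

(* Defs.v *)
From HB Require Import structures.
From mathcomp Require Import all_boot all_order all_algebra all_fingroup.
Set Implicit Arguments. Unset Strict Implicit. Unset Printing Implicit Defensive.
Import Order.TTheory GRing.Theory Num.Theory.
Local Open Scope ring_scope.

(* Letters 1,2,3 are represented by the ordinals 0,1,2 of 'I_3. *)

Definition Omega (T : nat) : {set T.-tuple 'I_3} :=
  [set w : T.-tuple 'I_3 |
     [forall l : 'I_T, (l.+1 < T)%N ==> (tnth w l != nth ord0 w l.+1)]].

(* x_ij(w) = #{ 1 <= l <= T-1 : s_l s_{l+1} = ij } (0-based here) *)
Definition xcount (T : nat) (w : T.-tuple 'I_3) (i j : 'I_3) : nat :=
  #|[set l : 'I_T | [&& (l.+1 < T)%N, tnth w l == i & nth ord0 w l.+1 == j]]|.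

(* Coordinate order [x12, x13, x21, x23, x31, x32] *)
Definition pair_of (k : 'I_6) : 'I_3 * 'I_3 :=
  nth (ord0, ord0)
    [:: (inord 0, inord 1); (inord 0, inord 2); (inord 1, inord 0);
        (inord 1, inord 2); (inord 2, inord 0); (inord 2, inord 1)] k.

(* inverse on off-diagonal pairs (diagonal pairs are never used) *)
Definition idx_of (i j : 'I_3) : 'I_6 :=
  inord (2 * i + (if (j < i)%N then (j : nat) else (j : nat).-1))%N.

Definition avec (R : pzRingType) (T : nat) (w : T.-tuple 'I_3) : 'rV[R]_6 :=
  \row_(k < 6) (xcount w (pair_of k).1 (pair_of k).2)%:R.

Definition sact (R : pzRingType) (s : 'S_3) (c : 'rV[R]_6) : 'rV[R]_6 :=
  \row_(k < 6) c 0 (idx_of (s (pair_of k).1) (s (pair_of k).2)).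

Definition dotv (R : pzRingType) (c x : 'rV[R]_6) : R := \sum_(k < 6) c 0 k * x 0 k.

Definition PT (R : realFieldType) (T : nat) : 'rV[R]_6 -> Prop :=
  fun x => exists lam : T.-tuple 'I_3 -> R,
    (forall w, 0 <= lam w) /\
    \sum_(w in Omega T) lam w = 1 /\
    x = \sum_(w in Omega T) lam w *: @avec R _ w.

Definition has_aff_indep (R : realFieldType) (S : 'rV[R]_6 -> Prop) (d : nat) : Prop :=
  exists p : 'I_d.+1 -> 'rV[R]_6,
    (forall i, S (p i)) /\
    row_free (\matrix_(i < d) (p (lift ord0 i) - p ord0)).

(* affine dimension of a set S (as an integer; -1 for the empty set) *)
Definition is_affdim (R : realFieldType) (S : 'rV[R]_6 -> Prop) (d : int) : Prop :=
  match d with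
  | Posz n => has_aff_indep S n /\ ~ has_aff_indep S n.+1
  | Negz 0 => forall x, ~ S x
  | Negz _ => False
  end.

Definition defines_facet (R : realFieldType) (T : nat) (c : 'rV[R]_6) : Prop :=
  (forall w, w \in Omega T -> 0 <= dotv c (@avec R _ w)) /\
  exists d : int,
    @is_affdim R (@PT R T) d /\
    @is_affdim R (fun x => @PT R T x /\ dotv c x = 0) (d - 1).

Definition cvec (R : pzRingType) (k : nat) : 'rV[R]_6 :=
  \row_(i < 6) nth 0
    [:: (2 * k + 1)%:R; - k%:R; - k%:R; - k%:R; (2 * k + 1)%:R; (2 * k + 1)%:R] i.

(* Main.v *)
Require Import Defs.
From HB Require Import structures.
From mathcomp Require Import all_boot all_order all_algebra all_fingroup.
Import Order.TTheory GRing.Theory Num.Theory.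
Set Implicit Arguments. Unset Strict Implicit. Unset Printing Implicit Defensive.
From mathcomp Require Import lra ring zify.
Local Open Scope ring_scope.

Definition o3 (n : nat) : 'I_3 :=
  match n with 0 => @Ordinal 3 0 isT | 1 => @Ordinal 3 1 isT | _ => @Ordinal 3 2 isT end.
Definition o6 (n : nat) : 'I_6 :=
  match n with 0 => @Ordinal 6 0 isT | 1 => @Ordinal 6 1 isT | 2 => @Ordinal 6 2 isT
  | 3 => @Ordinal 6 3 isT | 4 => @Ordinal 6 4 isT | _ => @Ordinal 6 5 isT end.
Definition pair_of' (k : 'I_6) : 'I_3 * 'I_3 :=
  nth (ord0, ord0)
    [:: (o3 0, o3 1); (o3 0, o3 2); (o3 1, o3 0);
        (o3 1, o3 2); (o3 2, o3 0); (o3 2, o3 1)] k.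
Definition idx_of' (i j : 'I_3) : 'I_6 :=
  o6 (2 * i + (if (j < i)%N then (j : nat) else (j : nat).-1))%N.

Lemma inord3 n : (n < 3)%N -> (inord n : 'I_3) = o3 n.
Proof. move=> hn; apply: val_inj; rewrite /= inordK //. case: n hn => [|[|[|]]] //. Qed.
Lemma inord6 n : (n < 6)%N -> (inord n : 'I_6) = o6 n.
Proof. by move=> hn; apply: val_inj; rewrite /= inordK //; case: n hn => [|[|[|[|[|[|]]]]]]. Qed.

Lemma pair_ofE q : pair_of q = pair_of' q.
Proof. by rewrite /pair_of /pair_of' !inord3. Qed.
Lemma idx_ofE a b : idx_of a b = idx_of' a b.
Proof. rewrite /idx_of /idx_of' inord6 //.
by case: a b => [[|[|[|//]]] ?] [[|[|[|//]]] ?]. Qed.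

Lemma F1 a b q : a != b -> ((pair_of q).1 == a) && ((pair_of q).2 == b) = (q == idx_of a b).
Proof.
rewrite pair_ofE idx_ofE.
by case: a b q => [[|[|[|//]]] ?] [[|[|[|//]]] ?] [[|[|[|[|[|[|//]]]]]] ?].
Qed.

Lemma F2 q : (pair_of q).1 != (pair_of q).2.
Proof. by rewrite pair_ofE; case: q => [[|[|[|[|[|[|//]]]]]] ?]. Qed.

Lemma pair_idx a b : a != b -> pair_of (idx_of a b) = (a, b).
Proof.
move=> ab; have := F1 (idx_of a b) ab; rewrite eqxx => /andP [/eqP h1 /eqP h2].
by rewrite [LHS]surjective_pairing h1 h2.
Qed.

Lemma idx_pair q : idx_of (pair_of q).1 (pair_of q).2 = q.
Proof. by apply/esym/eqP; rewrite -F1 ?F2 // !eqxx. Qed.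

Definition E (a b : 'I_3) : bool :=
  (((a : nat) == 0%N) && ((b : nat) == 1%N)) || (((a : nat) == 2%N) && ((b : nat) != 2%N)).

Lemma cvec_idx (R : pzRingType) k a b : a != b ->
  @cvec R k 0 (idx_of a b) = if E a b then (2 * k + 1)%:R else - k%:R.
Proof.
rewrite idx_ofE mxE.
by case: a b => [[|[|[|//]]] ?] [[|[|[|//]]] ?].
Qed.

Lemma E3 a b c d : a != b -> b != c -> c != d -> [|| E a b, E b c | E c d].
Proof.
by case: a b c d => [[|[|[|//]]] ?] [[|[|[|//]]] ?] [[|[|[|//]]] ?] [[|[|[|//]]] ?].
Qed.

Lemma xcountE T (w : T.-tuple 'I_3) i j :
  xcount w i j = (\sum_(l < T.-1) ((nth ord0 w l == i) && (nth ord0 w l.+1 == j)))%N.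
Proof.
rewrite /xcount -sum1_card big_mkcond /=.
case: T w => [|T] w /=; first by rewrite !big_ord0.
rewrite big_ord_recr /= inE ltnn /= addn0.
apply: eq_bigr => l _; rewrite inE /= ltnS ltn_ord /= (tnth_nth ord0) /=.
by case: (_ && _).
Qed.

Lemma OmegaP T (w : T.-tuple 'I_3) : w \in Omega T ->
  forall l, (l.+1 < T)%N -> nth ord0 w l != nth ord0 w l.+1.
Proof.
rewrite inE => /forallP H l hl; have hl' : (l < T)%N by apply: ltnW.
by move: (H (Ordinal hl')) => /implyP /(_ hl); rewrite (tnth_nth ord0).
Qed.

Lemma OmegaI T (w : T.-tuple 'I_3) :
  (forall l, (l.+1 < T)%N -> nth ord0 w l != nth ord0 w l.+1) -> w \in Omega T.
Proof.
move=> H; rewrite inE; apply/forallP => l; apply/implyP => hl.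
by rewrite (tnth_nth ord0); apply: H.
Qed.

Lemma sum_pairs (R : pzRingType) T (w : T.-tuple 'I_3) (psi : 'I_3 -> 'I_3 -> R) :
  w \in Omega T ->
  \sum_(q < 6) psi (pair_of q).1 (pair_of q).2 * (xcount w (pair_of q).1 (pair_of q).2)%:R
  = \sum_(l < T.-1) psi (nth ord0 w l) (nth ord0 w l.+1).
Proof.
move=> wO.
under eq_bigr => q _ do rewrite xcountE natr_sum mulr_sumr.
rewrite exchange_big /=; apply: eq_bigr => l _.
have hl : (l.+1 < T)%N by have := ltn_ord l; lia.
have ab := OmegaP wO hl.
under eq_bigr => q _ do rewrite [nth ord0 w l == _]eq_sym [nth ord0 w l.+1 == _]eq_sym (F1 _ ab).
rewrite (bigD1 (idx_of (nth ord0 w l) (nth ord0 w l.+1))) //= eqxx mulr1 big1 ?addr0.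
  by rewrite pair_idx.
by move=> q /negbTE ->; rewrite mulr0.
Qed.

Lemma dot_sact (R : pzRingType) T (w : T.-tuple 'I_3) s (c : 'rV[R]_6) :
  w \in Omega T ->
  dotv (sact s c) (@avec R _ w) =
  \sum_(l < T.-1) c 0 (idx_of (s (nth ord0 w l)) (s (nth ord0 w l.+1))).
Proof.
move=> wO; rewrite /dotv -(sum_pairs (fun a b => c 0 (idx_of (s a) (s b))) wO).
by apply: eq_bigr => q _; rewrite !mxE.
Qed.

Lemma dot_ones (R : pzRingType) T (w : T.-tuple 'I_3) :
  w \in Omega T -> dotv (const_mx 1) (@avec R _ w) = (T.-1)%:R.
Proof.
move=> wO; rewrite /dotv.
have := sum_pairs (fun _ _ => (1 : R)) wO; rewrite sumr_const card_ord => <-.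
by apply: eq_bigr => q _; rewrite !mxE.
Qed.

Lemma nonneg (R : realFieldType) k s (w : (3 * k + 2).-tuple 'I_3) :
  w \in Omega (3 * k + 2) -> 0 <= dotv (sact s (@cvec R k)) (@avec R _ w).
Proof.
move=> wO; rewrite dot_sact //.
set h := fun l => @cvec R k 0 (idx_of (s (nth ord0 w l)) (s (nth ord0 w l.+1))).
rewrite -(big_mkord xpredT h) /=.
have -> : ((3 * k + 2).-1 = (3 * k).+1)%N by lia.
have hk : (0 : R) <= k%:R by rewrite ler0n.
have hval l : (l.+1 < 3 * k + 2)%N ->
    h l = if E (s (nth ord0 w l)) (s (nth ord0 w l.+1)) then (2 * k + 1)%:R else - k%:R.
  move=> hl; rewrite /h cvec_idx //.
  by rewrite (inj_eq perm_inj); apply: OmegaP.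
have hblock j : (j < k)%N -> 1 <= h (3 * j)%N + h (3 * j).+1 + h (3 * j).+2.
  move=> hj; rewrite !hval; try lia.
  have := @E3 (s (nth ord0 w (3 * j))) (s (nth ord0 w (3 * j).+1))
     (s (nth ord0 w (3 * j).+2)) (s (nth ord0 w (3 * j).+3)).
  rewrite !(inj_eq perm_inj) !OmegaP //; try lia.
  move=> /(_ isT isT isT).
  rewrite natrD natrM.
  by case: (E _ _); case: (E _ _); case: (E _ _) => //= _; lra.
have hsum j : (j <= k)%N -> j%:R <= \sum_(0 <= l < 3 * j) h l.
  elim: j => [|j IH] hj; first by rewrite big_geq.
  have -> : (3 * j.+1 = (3 * j).+2.+1)%N by lia.
  rewrite big_nat_recr // big_nat_recr // big_nat_recr //.
  have := IH (ltnW hj); have := hblock j hj.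
  rewrite -[j.+1]addn1 natrD /=; lra.
rewrite big_nat_recr //.
have := hsum k (leqnn k); rewrite hval; last by lia.
by case: (E _ _); rewrite /= ?natrD ?natrM; lra.
Qed.

Lemma size_W T (f : nat -> 'I_3) : size (map f (iota 0 T)) == T.
Proof. by rewrite size_map size_iota. Qed.
Definition W T (f : nat -> 'I_3) : T.-tuple 'I_3 := Tuple (size_W T f).

Lemma nthW T f l : (l < T)%N -> nth ord0 (W T f) l = f l.
Proof. by move=> hl; rewrite /= (nth_map 0) ?size_iota // nth_iota. Qed.

Lemma W_Omega T f : (forall l, f l != f l.+1) -> W T f \in Omega T.
Proof.
by move=> H; apply: OmegaI => l hl; rewrite !nthW //; apply: ltnW.
Qed.

Lemma sumW (R : nmodType) T f (F : 'I_3 -> 'I_3 -> R) :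
  \sum_(l < T.-1) F (nth ord0 (W T f) l) (nth ord0 (W T f) l.+1) =
  \sum_(0 <= l < T.-1) F (f l) (f l.+1).
Proof.
rewrite big_mkord; apply: eq_bigr => l _.
have := ltn_ord l => hl.
by rewrite !nthW //; lia.
Qed.

Fixpoint g (l : nat) : 'I_3 :=
  match l with 0 => o3 1 | 1 => o3 0 | 2 => o3 2 | l'.+3 => g l' end.

Lemma g3 m r : g (3 * m + r) = g r.
Proof. by elim: m => // m IH; have -> : (3 * m.+1 + r = (3 * m + r).+3)%N by lia. Qed.

Lemma g_neq_aux l : forall n, (n <= l)%N -> g n != g n.+1.
Proof. elim: l => [|l IH] [|[|[|n]]] //= hn; apply: IH; lia. Qed.

Lemma g_neq l : g l != g l.+1.
Proof. exact: (g_neq_aux (leqnn l)). Qed.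

Lemma per3 (R : nmodType) (G : nat -> R) m r : (forall l, G l.+3 = G l) -> G (3 * m + r)%N = G r.
Proof.
move=> HG; elim: m => // m IH.
have -> : (3 * m.+1 + r = (3 * m + r).+3)%N by lia. rewrite HG. exact: IH.
Qed.

Lemma sum_per (R : nmodType) (G : nat -> R) m : (forall l, G l.+3 = G l) ->
  \sum_(0 <= l < 3 * m) G l = (G 0%N + G 1%N + G 2%N) *+ m.
Proof.
move=> HG; elim: m => [|m IH]; first by rewrite big_geq.
have -> : (3 * m.+1 = (3 * m).+2.+1)%N by lia.
rewrite big_nat_recr // big_nat_recr // big_nat_recr // IH /=.
have h r : G (3 * m + r)%N = G r by apply: per3.
rewrite -(addn2 (3 * m)) h -(addn1 (3 * m)) h -[(3 * m)%N]addn0 h.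
by rewrite mulrS [RHS]addrC !addrA.
Qed.

Definition fX (X : seq 'I_3) (l : nat) : 'I_3 := if (l < 4)%N then nth ord0 X l else g l.+1.

Lemma sumX (R : nmodType) (F : 'I_3 -> 'I_3 -> R) m X :
  \sum_(0 <= l < (3 * m).+4) F (fX X l) (fX X l.+1) =
  F (nth ord0 X 0) (nth ord0 X 1) + F (nth ord0 X 1) (nth ord0 X 2) +
  F (nth ord0 X 2) (nth ord0 X 3) + F (nth ord0 X 3) (o3 2) +
  (F (o3 2) (o3 1) + F (o3 1) (o3 0) + F (o3 0) (o3 2)) *+ m.
Proof.
rewrite !big_nat_recl //= !addrA.
by rewrite (@sum_per _ (fun l => F (g l.+4.+1) (g l.+4.+2))).
Qed.

Definition fY m (Y : seq 'I_3) (l : nat) : 'I_3 :=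
  if (l < (3 * m).+1)%N then g l else nth ord0 Y (l - (3 * m).+1).

Lemma sumY (R : nmodType) (F : 'I_3 -> 'I_3 -> R) m Y :
  \sum_(0 <= l < (3 * m).+4) F (fY m Y l) (fY m Y l.+1) =
  (F (o3 1) (o3 0) + F (o3 0) (o3 2) + F (o3 2) (o3 1)) *+ m +
  F (o3 1) (nth ord0 Y 0) + F (nth ord0 Y 0) (nth ord0 Y 1) +
  F (nth ord0 Y 1) (nth ord0 Y 2) + F (nth ord0 Y 2) (nth ord0 Y 3).
Proof.
rewrite !big_nat_recr //=.
rewrite (@eq_big_nat _ _ _ 0 (3 * m) _ (fun l => F (g l) (g l.+1))); last first.
  by move=> l hl; rewrite /fY !ifT //; lia.
rewrite (@sum_per _ (fun l => F (g l) (g l.+1))) //.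
have e0 : fY m Y (3 * m) = o3 1 by rewrite /fY ifT // -[(3 * m)%N]addn0 g3.
have e1 : fY m Y (3 * m).+1 = nth ord0 Y 0 by rewrite /fY ifF ?subnn //; lia.
have e2 : fY m Y (3 * m).+2 = nth ord0 Y 1.
  by rewrite /fY ifF; [congr nth; lia | lia].
have e3 : fY m Y (3 * m).+3 = nth ord0 Y 2.
  by rewrite /fY ifF; [congr nth; lia | lia].
have e4 : fY m Y (3 * m).+4 = nth ord0 Y 3.
  by rewrite /fY ifF; [congr nth; lia | lia].
by rewrite e0 e1 e2 e3 e4.
Qed.

Lemma avec_W (R : pzRingType) T f q : (0 < T)%N ->
  @avec R T (W T f) 0 q =
  \sum_(0 <= l < T.-1) ((f l == (pair_of q).1) && (f l.+1 == (pair_of q).2))%:R.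
Proof.
move=> hT; rewrite mxE xcountE natr_sum big_mkord; apply: eq_bigr => l _.
have := ltn_ord l => hl.
by rewrite !nthW //; lia.
Qed.

Lemma permK_eq (s : 'S_3) x a : (s^-1 x == a)%g = (x == s a).
Proof. by rewrite -(inj_eq (@perm_inj _ s)) permKV. Qed.

Lemma avec_perm (R : pzRingType) T f (s : 'S_3) : (0 < T)%N ->
  @avec R T (W T (fun l => (s^-1)%g (f l))) = sact s (@avec R T (W T f)).
Proof.
move=> hT; apply/rowP => q; rewrite [RHS]mxE !avec_W // pair_idx /=; last first.
  by rewrite (inj_eq perm_inj) F2.
by apply: eq_big_nat => l _; rewrite !permK_eq.
Qed.

Definition fY_ok m Y :
  nth ord0 Y 0 != o3 1 -> nth ord0 Y 0 != nth ord0 Y 1 -> nth ord0 Y 1 != nth ord0 Y 2 ->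
  nth ord0 Y 2 != nth ord0 Y 3 ->
  forall l, (l.+1 < (3 * m).+4.+1)%N -> fY m Y l != fY m Y l.+1.
Proof.
move=> h0 h1 h2 h3 l hl.
case: (ltnP l (3 * m)) => hlm.
  by rewrite /fY !ifT ?g_neq //; lia.
have [r er] : exists r, l = (3 * m + r)%N by exists (l - 3 * m)%N; lia.
rewrite er in hl *; clear er.
have fa r' : fY m Y (3 * m + r').+1 = nth ord0 Y r'.
  by rewrite /fY ifF; [congr nth; lia | lia].
rewrite fa; case: r hl {hlm} => [|r] hl.
  by rewrite addn0 /fY ifT // -[(3 * m)%N]addn0 g3 eq_sym.
rewrite addnS fa.
by case: r hl => [|[|[|r]]] //= hl; lia.
Qed.

Lemma fX_ok X :
  nth ord0 X 0 != nth ord0 X 1 -> nth ord0 X 1 != nth ord0 X 2 ->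
  nth ord0 X 2 != nth ord0 X 3 -> nth ord0 X 3 != o3 2 ->
  forall l, fX X l != fX X l.+1.
Proof.
move=> h0 h1 h2 h3 [|[|[|[|l]]]] //; exact: (g_neq l.+1.+4).
Qed.

Definition wf (i : nat) m : nat -> 'I_3 :=
  match i with
  | 0 => fY m [:: o3 0; o3 2; o3 1; o3 0]
  | 1 => fY m [:: o3 0; o3 2; o3 1; o3 2]
  | 2 => fX [:: o3 0; o3 2; o3 1; o3 0]
  | 3 => fX [:: o3 1; o3 0; o3 2; o3 0]
  | 4 => fX [:: o3 1; o3 0; o3 1; o3 0]
  | _ => fY m [:: o3 0; o3 1; o3 0; o3 1]
  end.

Lemma wf_ok i m l : (l.+1 < (3 * m).+4.+1)%N -> wf i m l != wf i m l.+1.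
Proof.
move=> hl; case: i => [|[|[|[|[|i]]]]] /=;
  by [apply: fY_ok | apply: fX_ok].
Qed.

Lemma wf_Omega i m (s : 'S_3) :
  W (3 * m).+4.+1 (fun l => (s^-1)%g (wf i m l)) \in Omega (3 * m).+4.+1.
Proof.
apply: OmegaI => l hl; rewrite !nthW //; last by lia.
by rewrite (inj_eq perm_inj) wf_ok.
Qed.

Lemma face_dot (R : comNzRingType) m (s : 'S_3) i : (i < 5)%N ->
  dotv (sact s (@cvec R m.+1)) (@avec R _ (W (3 * m).+4.+1 (fun l => (s^-1)%g (wf i m l)))) = 0.
Proof.
move=> hi; rewrite dot_sact ?wf_Omega // (sumW _ _ (fun a b => @cvec R m.+1 0 (idx_of (s a) (s b)))) /=.
under eq_big_nat => l _ do rewrite !permKV.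
case: i hi => [|[|[|[|[|i]]]]] //= _.
- by rewrite (sumY (fun a b => @cvec R m.+1 0 (idx_of a b))) /= !cvec_idx //=; ring.
- by rewrite (sumY (fun a b => @cvec R m.+1 0 (idx_of a b))) /= !cvec_idx //=; ring.
- by rewrite (sumX (fun a b => @cvec R m.+1 0 (idx_of a b))) /= !cvec_idx //=; ring.
- by rewrite (sumX (fun a b => @cvec R m.+1 0 (idx_of a b))) /= !cvec_idx //=; ring.
- by rewrite (sumX (fun a b => @cvec R m.+1 0 (idx_of a b))) /= !cvec_idx //=; ring.
Qed.

Definition Pn (R : pzRingType) m (n : nat) : 'rV[R]_6 := @avec R _ (W (3 * m).+4.+1 (wf n m)).

Definition rowsL (R : pzRingType) : seq (seq R) :=
  [:: [:: 0; 0; -1; 1; 0; 0]; [:: 0; 1; -1; 0; 0; 0]; [:: 0; 1; -1; 0; 1; -1];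
      [:: 1; 0; 0; 0; 0; -1]; [:: 2; -1; 0; 0; 0; -1]].

Lemma Pdiff (R : comNzRingType) m (i : nat) (j : 'I_6) : (i < 5)%N ->
  (Pn R m i.+1 - Pn R m 0) 0 j = nth 0 (nth [::] (rowsL R) i) j.
Proof.
move=> hi; rewrite [LHS]mxE [X in _ + X]mxE /Pn !avec_W //.
case: j => [[|[|[|[|[|[|//]]]]]] hj]; rewrite pair_ofE /=;
case: i hi => [|[|[|[|[|//]]]]] _ /=;
rewrite ?(sumX (fun a b => ((a == _) && (b == _))%:R)) ?(sumY (fun a b => ((a == _) && (b == _))%:R)) /=;
ring.
Qed.

Definition Mc (R : pzRingType) n : 'M[R]_(n, 6) :=
  \matrix_(i < n, j < 6) nth 0 (nth [::] (rowsL R) i) j.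

Definition B5 (R : pzRingType) : 'M[R]_(6, 5) :=
  \matrix_(i < 6, j < 5) nth 0 (nth [::]
    [:: [:: 0; 0; 0; 1; 0]; [:: 0; 0; 0; 2; -1]; [:: 0; -1; 0; 2; -1];
        [:: 1; -1; 0; 2; -1]; [:: 0; -1; 1; 0; 0]; [:: 0; 0; 0; 0; 0]] i) j.

Definition B4 (R : pzRingType) : 'M[R]_(6, 4) :=
  \matrix_(i < 6, j < 4) nth 0 (nth [::]
    [:: [:: 0; 0; 0; 1]; [:: -1; 1; 0; 0]; [:: -1; 0; 0; 0];
        [:: 0; 0; 0; 0]; [:: 0; -1; 1; 0]; [:: 0; 0; 0; 0]] i) j.

Lemma rf5 (R : fieldType) : row_free (Mc R 5).
Proof.
apply/row_freeP; exists (B5 R); apply/matrixP => i j; rewrite !mxE.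
rewrite !big_ord_recr big_ord0 /= !mxE.
by case: i => [[|[|[|[|[|//]]]]] ?]; case: j => [[|[|[|[|[|//]]]]] ?] /=; ring.
Qed.

Lemma rf4 (R : fieldType) : row_free (Mc R 4).
Proof.
apply/row_freeP; exists (B4 R); apply/matrixP => i j; rewrite !mxE.
rewrite !big_ord_recr big_ord0 /= !mxE.
by case: i => [[|[|[|[|//]]]] ?]; case: j => [[|[|[|[|//]]]] ?] /=; ring.
Qed.

Lemma PT_avec (R : realFieldType) T (w : T.-tuple 'I_3) : w \in Omega T -> @PT R T (@avec R _ w).
Proof.
move=> wO; exists (fun w' => (w' == w)%:R); split; first by move=> w'; rewrite ler0n.
split.
  rewrite (bigD1 w) //= eqxx big1 ?addr0 // => w' /andP [_ /negbTE ->] //.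
rewrite (bigD1 w) //= eqxx scale1r big1 ?addr0 // => w' /andP [_ /negbTE ->].
by rewrite scale0r.
Qed.

Lemma dotv_sub (R : pzRingType) (u x y : 'rV[R]_6) : dotv u (x - y) = dotv u x - dotv u y.
Proof. by rewrite /dotv -sumrB; apply: eq_bigr => k _; rewrite !mxE mulrBr. Qed.

Lemma PT_dot (R : realFieldType) T (u : 'rV[R]_6) a :
  (forall w, w \in Omega T -> dotv u (@avec R _ w) = a) -> forall x, @PT R T x -> dotv u x = a.
Proof.
move=> H x [lam [_ [hs ->]]].
have -> : dotv u (\sum_(w in Omega T) lam w *: @avec R _ w) =
          \sum_(w in Omega T) lam w * dotv u (@avec R _ w).
  rewrite /dotv; under eq_bigr => k _ do rewrite summxE mulr_sumr.
  rewrite exchange_big; apply: eq_bigr => w _; rewrite mulr_sumr.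
  by apply: eq_bigr => k _; rewrite !mxE mulrCA.
under eq_bigr => w hw do rewrite H //.
by rewrite -big_distrl /= hs mul1r.
Qed.

Lemma aff_bound (R : realFieldType) n p (S : 'rV[R]_6 -> Prop) (A : 'M[R]_(p, 6)) :
  (forall j x y, S x -> S y -> dotv (row j A) x = dotv (row j A) y) ->
  row_free A -> has_aff_indep S n -> (n + p <= 6)%N.
Proof.
move=> HS rA [pt [hS rM]].
set M := \matrix_(i < n) (pt (lift ord0 i) - pt ord0) in rM.
have hMA : (M *m A^T = 0)%R.
  apply/matrixP => i j; rewrite !mxE.
  transitivity (dotv (row j A) (pt (lift ord0 i) - pt ord0)).
    by rewrite /dotv; apply: eq_bigr => k _; rewrite !mxE mulrC.
  by rewrite dotv_sub (HS j _ _ (hS (lift ord0 i)) (hS ord0)) subrr.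
have := mxrankS (introT sub_kermxP hMA).
rewrite mxrank_ker mxrank_tr (eqP rA) (eqP rM).
have := rank_leq_col A; rewrite (eqP rA); lia.
Qed.

Lemma off_dot (R : comNzRingType) m (s : 'S_3) :
  dotv (sact s (@cvec R m.+1)) (@avec R _ (W (3 * m).+4.+1 (fun l => (s^-1)%g (wf 5 m l)))) =
  (3 * m).+4%:R.
Proof.
rewrite dot_sact ?wf_Omega // (sumW _ _ (fun a b => @cvec R m.+1 0 (idx_of (s a) (s b)))) /=.
under eq_big_nat => l _ do rewrite !permKV.
by rewrite (sumY (fun a b => @cvec R m.+1 0 (idx_of a b))) /= !cvec_idx //=; ring.
Qed.

Definition pfun (s : 'S_3) (q : 'I_6) : 'I_6 := idx_of (s (pair_of q).1) (s (pair_of q).2).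

Lemma pfun_inj s : injective (pfun s).
Proof.
move=> q1 q2 h; have := congr1 pair_of h.
rewrite /pfun !pair_idx ?(inj_eq perm_inj) ?F2 // => [[/perm_inj e1 /perm_inj e2]].
by rewrite -(idx_pair q1) -(idx_pair q2) e1 e2.
Qed.

Lemma sact_col (R : pzRingType) s (v : 'rV[R]_6) : sact s v = col_perm (perm (@pfun_inj s)) v.
Proof. by apply/matrixP => i j; rewrite !mxE permE ord1. Qed.

Lemma sactB (R : pzRingType) s (a b : 'rV[R]_6) : sact s a - sact s b = sact s (a - b).
Proof. by apply/rowP => q; rewrite !mxE. Qed.

Theorem proposition9 (R : realFieldType) (k : nat) (s : 'S_3) :
  (1 <= k)%N -> @defines_facet R (3 * k + 2) (sact s (@cvec R k)).
Proof.
case: k => [//|m] _; split; first by move=> w; apply: nonneg.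
have -> : (3 * m.+1 + 2 = (3 * m).+4.+1)%N by lia.
set T := (3 * m).+4.+1.
set c' := sact s (@cvec R m.+1).
have hT : (0 < T)%N by [].
set x1 := @avec R _ (W T (fun l => (s^-1)%g (wf 0 m l))).
set x2 := @avec R _ (W T (fun l => (s^-1)%g (wf 5 m l))).
have ones_const : forall x y, @PT R T x -> @PT R T y ->
    dotv (const_mx 1) x = dotv (const_mx 1) y.
  move=> x y hx hy.
  by rewrite (PT_dot (a := T.-1%:R) _ hx) ?(PT_dot (a := T.-1%:R) _ hy) // => w hw;
    rewrite dot_ones.
have tnz : (T.-1%:R : R) != 0 by rewrite pnatr_eq0.
exists 5%:Z; rewrite /is_affdim.
have -> : (5%:Z - 1 = 4%:Z)%R by [].
split; split.
- exists (fun i : 'I_6 => Pn R m i); split.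
    move=> i; apply: PT_avec; apply: OmegaI => l hl; rewrite !nthW ?wf_ok //; lia.
  have -> : (\matrix_(i < 5) (Pn R m (lift (@ord0 5) i) - Pn R m (@ord0 5)) : 'M[R]_(5, 6)) = Mc R 5.
    apply/matrixP => i j; rewrite [RHS]mxE -(@Pdiff R m i j (ltn_ord i)) [LHS]mxE lift0.
    by [].
  exact: rf5.
- move=> H.
  suff : (6 + 1 <= 6)%N by [].
  apply: (@aff_bound R 6 1 (@PT R T) (const_mx 1) _ _ H).
  + move=> j x y hx hy; rewrite ord1.
    have -> : row 0 (const_mx 1 : 'M[R]_(1, 6)) = const_mx 1 by apply/rowP => q; rewrite !mxE.
    exact: ones_const.
  + apply: inj_row_free => v hv; apply/rowP => i; rewrite ord1 mxE.
    have := congr1 (fun M : 'M_(1, 6) => M 0 0) hv.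
    by rewrite !mxE big_ord1 mxE mulr1.
- exists (fun i : 'I_5 => @avec R _ (W T (fun l => (s^-1)%g (wf i m l)))); split.
    move=> i; split; first by apply: PT_avec; apply: wf_Omega.
    by apply: face_dot.
  have -> : (\matrix_(i < 4) (@avec R _ (W T (fun l => (s^-1)%g (wf (lift (@ord0 4) i) m l))) -
        @avec R _ (W T (fun l => (s^-1)%g (wf (@ord0 4) m l)))) : 'M[R]_(4, 6)) =
      col_perm (perm (@pfun_inj s)) (Mc R 4).
    apply/matrixP => i j; rewrite [LHS]mxE !avec_perm // sactB /sact [LHS]mxE lift0.
    rewrite [RHS]mxE permE [RHS]mxE.
    by rewrite -(@Pdiff R m i (pfun s j) (leq_trans (ltn_ord i) (leqnSn 4))).
  rewrite /row_free col_permE mxrankMfree; first exact: rf4.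
  by rewrite row_free_unit unitmx_perm.
- move=> H.
  set A : 'M[R]_(2, 6) := \matrix_(j < 2, q < 6) (if j == ord0 then 1 else c' 0 q).
  suff : (5 + 2 <= 6)%N by [].
  apply: (@aff_bound R 5 2 (fun x => @PT R T x /\ dotv c' x = 0) A _ _ H).
  + move=> j x y [hx hx0] [hy hy0].
    case: j => [[|[|//]] hj].
      have -> : row (Ordinal hj) A = const_mx 1 by apply/rowP => q; rewrite !mxE.
      exact: ones_const.
    have -> : row (Ordinal hj) A = c' by apply/rowP => q; rewrite !mxE.
    by rewrite hx0 hy0.
  + apply: inj_row_free => v hv.
    have Ae j q : A j q = if j == ord0 then 1 else c' 0 q by rewrite mxE.
    have key x : dotv (v *m A) x =
        v 0 ord0 * dotv (const_mx 1) x + v 0 (lift ord0 ord0) * dotv c' x.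
      rewrite /dotv !mulr_sumr -big_split /=; apply: eq_bigr => q _.
      have ce : (const_mx 1 : 'rV[R]_6) 0 q = 1 by rewrite mxE.
      rewrite [(v *m A) 0 q]mxE !big_ord_recl big_ord0 !Ae /= ce; ring.
    have h1 := key x1; have h2 := key x2.
    rewrite hv {1}/dotv big1 in h1; last by move=> q _; rewrite mxE mul0r.
    rewrite hv {1}/dotv big1 in h2; last by move=> q _; rewrite mxE mul0r.
    rewrite dot_ones ?wf_Omega // face_dot // mulr0 addr0 in h1.
    rewrite dot_ones ?wf_Omega // off_dot in h2.
    have v0 : v 0 ord0 = 0.
      by apply/eqP; move/esym/eqP: h1; rewrite mulf_eq0 (negbTE tnz) orbF.
    rewrite v0 mul0r add0r in h2.
    have v1 : v 0 (lift ord0 ord0) = 0.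
      by apply/eqP; move/esym/eqP: h2; rewrite mulf_eq0 pnatr_eq0 orbF.
    apply/rowP => i; rewrite mxE; case: i => [[|[|//]] hi].
      by rewrite -v0; congr (v _ _); apply: val_inj.
    by rewrite -v1; congr (v _ _); apply: val_inj.
Qed.
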